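(* Let $C\subset\mathbb{R}^p$ be a closed convex pointed cone containing $0$ with nonempty interior such that $P\subset\mathrm{int}(C)\cup\{0\}$. There exists a constant $M(C,P)\ge0$ such that for all $K_1,K_2\in\mathcal{K}(C,P)$, $$\mathcal{H}\big(\mathcal{E}(K_1,P),\mathcal{E}(K_2,P)\big)\le M(C,P)\,\mathcal{H}(K_1,K_2).$$
   Context: $\mathbb{R}^p$ carries the Euclidean norm. $P\subset\mathbb{R}^p$ is a closed convex pointed ($P\cap(-P)=\{0\}$) cone containing $0$ with nonempty interior. For nonempty $S\subset\mathbb{R}^p$ and such a cone $Q$, $\mathcal{E}(S,Q)=\{y\in S:(y-Q)\cap S=\{y\}\}$. $\mathcal{K}(C,P)$ is the set of nonempty compact $K\subset\mathbb{R}^p$ with $\mathcal{E}(K,P)=\mathcal{E}(K,C)$. For nonempty bounded $M_1,M_2$, the Hausdorff distance is $\mathcal{H}(M_1,M_2)=\max\{\sup_{m_1\in M_1}d(m_1,M_2),\sup_{m_2\in M_2}d(m_2,M_1)\}$, $d(y,S)=\inf_{m\in S}\|y-m\|$. *)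

(* Defs.v *)
From Stdlib Require Import Reals.
Open Scope R_scope.

(** Points of R^p are represented as functions nat -> R that vanish
    at every index >= p (predicate [in_Rp p]). *)
Definition vec := nat -> R.

Definition in_Rp (p : nat) (x : vec) : Prop := forall i, (p <= i)%nat -> x i = 0.

Definition vzero : vec := fun _ => 0.
Definition vadd (x y : vec) : vec := fun i => x i + y i.
Definition vsub (x y : vec) : vec := fun i => x i - y i.
Definition vopp (x : vec) : vec := fun i => - x i.
Definition vscal (t : R) (x : vec) : vec := fun i => t * x i.

Fixpoint sum_first (n : nat) (f : nat -> R) : R :=
  match n with
  | O => 0
  | S k => sum_first k f + f k
  end.

Definition vnorm (p : nat) (x : vec) : R := sqrt (sum_first p (fun i => x i * x i)).

Definition subset_Rp (p : nat) (S : vec -> Prop) : Prop := forall x, S x -> in_Rp p x.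

Definition closed_Rp (p : nat) (S : vec -> Prop) : Prop :=
  forall x, in_Rp p x ->
    (forall eps, 0 < eps -> exists y, S y /\ vnorm p (vsub x y) < eps) -> S x.

Definition interior_pt (p : nat) (S : vec -> Prop) (x : vec) : Prop :=
  in_Rp p x /\ exists r, 0 < r /\ forall y, in_Rp p y -> vnorm p (vsub y x) < r -> S y.

Definition good_cone (p : nat) (C : vec -> Prop) : Prop :=
  subset_Rp p C /\
  closed_Rp p C /\
  C vzero /\
  (forall x y, C x -> C y -> C (vadd x y)) /\
  (forall t x, 0 <= t -> C x -> C (vscal t x)) /\
  (forall x, C x -> C (vopp x) -> x = vzero) /\
  (exists x, interior_pt p C x).

Definition compact_Rp (p : nat) (K : vec -> Prop) : Prop :=
  forall u : nat -> vec, (forall n, K (u n)) ->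
    exists (phi : nat -> nat) (l : vec),
      (forall n, (phi n < phi (S n))%nat) /\ K l /\
      (forall eps, 0 < eps -> exists N, forall n, (N <= n)%nat ->
          vnorm p (vsub (u (phi n)) l) < eps).

Definition eff (S Q : vec -> Prop) (y : vec) : Prop :=
  S y /\ forall z, S z -> (exists q, Q q /\ z = vsub y q) -> z = y.

Definition KCP (p : nat) (C P : vec -> Prop) (K : vec -> Prop) : Prop :=
  subset_Rp p K /\ (exists x, K x) /\ compact_Rp p K /\
  (forall y, eff K P y <-> eff K C y).

Definition is_inf (E : R -> Prop) (m : R) : Prop :=
  (forall x, E x -> m <= x) /\ (forall b, (forall x, E x -> b <= x) -> b <= m).

Definition is_dist (p : nat) (y : vec) (S : vec -> Prop) (d : R) : Prop :=
  is_inf (fun r => exists m, S m /\ r = vnorm p (vsub y m)) d.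

Definition is_hausdorff (p : nat) (A B : vec -> Prop) (h : R) : Prop :=
  exists s1 s2,
    is_lub (fun r => exists a, A a /\ is_dist p a B r) s1 /\
    is_lub (fun r => exists b, B b /\ is_dist p b A r) s2 /\
    h = Rmax s1 s2.

(* Main.v *)
Require Import Defs.
From Stdlib Require Import Reals Lra Lia ZArith FunctionalExtensionality Classical ClassicalEpsilon.
Open Scope R_scope.


Lemma sf_ext n f g : (forall i, (i < n)%nat -> f i = g i) -> sum_first n f = sum_first n g.
Proof. induction n; simpl; intros H; [reflexivity|]. rewrite IHn by (intros; apply H; lia). rewrite H by lia. reflexivity. Qed.

Lemma sf_plus n f g : sum_first n (fun i => f i + g i) = sum_first n f + sum_first n g.
Proof. induction n; simpl; [ring|]. rewrite IHn. ring. Qed.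

Lemma sf_scal n c f : sum_first n (fun i => c * f i) = c * sum_first n f.
Proof. induction n; simpl; [ring|]. rewrite IHn. ring. Qed.

Lemma sf_le n f g : (forall i, (i < n)%nat -> f i <= g i) -> sum_first n f <= sum_first n g.
Proof. induction n; simpl; intros H; [lra|]. assert (H1 := H n ltac:(lia)). assert (sum_first n f <= sum_first n g) by (apply IHn; intros; apply H; lia). lra. Qed.

Lemma sf_nonneg n f : (forall i, (i < n)%nat -> 0 <= f i) -> 0 <= sum_first n f.
Proof. intros H. replace 0 with (sum_first n (fun _ => 0)). apply sf_le; auto. induction n; simpl; [auto| rewrite IHn; [ring|intros; apply H; lia]]. Qed.

Lemma sf_term n f i : (forall j, (j < n)%nat -> 0 <= f j) -> (i < n)%nat -> f i <= sum_first n f.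
Proof. induction n; simpl; intros H Hi; [lia|]. destruct (Nat.eq_dec i n) as [->|Hne].
- assert (0 <= sum_first n f) by (apply sf_nonneg; intros; apply H; lia). lra.
- assert (f i <= sum_first n f) by (apply IHn; [intros; apply H; lia| lia]). assert (0 <= f n) by (apply H; lia). lra. Qed.

Lemma sf_const n f c : (forall i, (i < n)%nat -> f i <= c) -> sum_first n f <= INR n * c.
Proof. induction n; intros H; [simpl; lra|]. rewrite S_INR. simpl sum_first. assert (sum_first n f <= INR n * c) by (apply IHn; intros; apply H; lia).
 assert (f n <= c) by (apply H; lia). lra. Qed.

Definition nsq p (x : vec) := sum_first p (fun i => x i * x i).
Definition ip p (x y : vec) := sum_first p (fun i => x i * y i).

Lemma nsq_nonneg p x : 0 <= nsq p x.
Proof. apply sf_nonneg. intros. nra. Qed.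

Lemma vnorm_nonneg p x : 0 <= vnorm p x.
Proof. apply sqrt_pos. Qed.

Lemma vnorm_sq p x : vnorm p x * vnorm p x = nsq p x.
Proof. apply sqrt_sqrt, nsq_nonneg. Qed.

Lemma nsq_lin p x y t : nsq p (fun i => x i + t * y i) = nsq p x + 2 * t * ip p x y + t * t * nsq p y.
Proof. unfold nsq, ip. rewrite <- !sf_scal, <- !sf_plus. apply sf_ext. intros; ring. Qed.

Lemma CS_sq p x y : ip p x y * ip p x y <= nsq p x * nsq p y.
Proof.
  set (a := nsq p x). set (b := ip p x y). set (c := nsq p y).
  assert (H : forall t, 0 <= a + 2 * t * b + t * t * c).
  { intros t. unfold a, b, c. rewrite <- nsq_lin. apply nsq_nonneg. }
  assert (Ha : 0 <= a) by apply nsq_nonneg. assert (Hc : 0 <= c) by apply nsq_nonneg.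
  destruct (Req_dec c 0) as [Hc0|Hc0].
  - destruct (Req_dec b 0) as [Hb|Hb]. { rewrite Hb. nra. }
    specialize (H (- (a+1) / (2*b))). rewrite Hc0 in H.
    replace (a + 2 * (- (a + 1) / (2 * b)) * b + - (a + 1) / (2 * b) * (- (a + 1) / (2 * b)) * 0) with (-1) in H by (field; auto). lra.
  - specialize (H (- b / c)).
    replace (a + 2 * (- b / c) * b + - b / c * (- b / c) * c) with ((a * c - b * b) / c) in H by (field; auto).
    assert (0 <= a * c - b * b). { apply Rmult_le_reg_r with (/ c). apply Rinv_0_lt_compat; lra. rewrite Rmult_0_l. exact H. }
    lra.
Qed.

Lemma CS_abs p x y : Rabs (ip p x y) <= vnorm p x * vnorm p y.
Proof.
  unfold vnorm. rewrite <- sqrt_mult by apply nsq_nonneg.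
  rewrite <- sqrt_Rsqr_abs. apply sqrt_le_1_alt. unfold Rsqr. apply CS_sq.
Qed.

Lemma CS p x y : ip p x y <= vnorm p x * vnorm p y.
Proof. eapply Rle_trans; [apply Rle_abs| apply CS_abs]. Qed.

Lemma sqrt_le_sq a b : 0 <= b -> a <= b * b -> sqrt a <= b.
Proof. intros Hb H. rewrite <- (sqrt_square b Hb). apply sqrt_le_1_alt. exact H. Qed.

Lemma vnorm_add p x y : vnorm p (vadd x y) <= vnorm p x + vnorm p y.
Proof.
  change (sqrt (nsq p (vadd x y)) <= vnorm p x + vnorm p y). apply sqrt_le_sq. pose proof (vnorm_nonneg p x); pose proof (vnorm_nonneg p y); lra.
  assert (E : nsq p (vadd x y) = nsq p x + 2 * 1 * ip p x y + 1 * 1 * nsq p y).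
  { rewrite <- nsq_lin. unfold nsq, vadd. apply sf_ext; intros; ring. }
  rewrite E. pose proof (CS p x y). rewrite <- (vnorm_sq p x), <- (vnorm_sq p y). lra.
Qed.

Lemma vnorm_scal p t x : vnorm p (vscal t x) = Rabs t * vnorm p x.
Proof.
  change (sqrt (nsq p (vscal t x)) = Rabs t * sqrt (nsq p x)). replace (nsq p (vscal t x)) with ((t * t) * nsq p x).
  rewrite sqrt_mult by (nra || apply nsq_nonneg). f_equal. rewrite <- sqrt_Rsqr_abs. reflexivity.
  unfold nsq, vscal. rewrite <- sf_scal. apply sf_ext; intros; ring.
Qed.

Lemma vnorm_opp p x : vnorm p (vopp x) = vnorm p x.
Proof. replace (vopp x) with (vscal (-1) x). rewrite vnorm_scal, Rabs_left by lra. ring.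
 apply functional_extensionality; intro; unfold vopp, vscal; ring. Qed.

Lemma vsub_sym p x y : vnorm p (vsub x y) = vnorm p (vsub y x).
Proof. replace (vsub y x) with (vopp (vsub x y)). apply eq_sym, vnorm_opp.
 apply functional_extensionality; intro; unfold vopp, vsub; ring. Qed.

Lemma vtri p x y z : vnorm p (vsub x z) <= vnorm p (vsub x y) + vnorm p (vsub y z).
Proof. replace (vsub x z) with (vadd (vsub x y) (vsub y z)). apply vnorm_add.
 apply functional_extensionality; intro; unfold vadd, vsub; ring. Qed.

Lemma vnorm_sub_le p x y : vnorm p (vsub x y) <= vnorm p x + vnorm p y.
Proof. replace (vsub x y) with (vadd x (vopp y)). rewrite <- (vnorm_opp p y). apply vnorm_add.
 apply functional_extensionality; intro; unfold vadd, vopp, vsub; ring. Qed.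

Lemma vnorm_le_sub p x l : vnorm p x <= vnorm p (vsub x l) + vnorm p l.
Proof. replace x with (vadd (vsub x l) l) at 1. apply vnorm_add.
 apply functional_extensionality; intro; unfold vadd, vsub; ring. Qed.

Lemma coord_le p x i : (i < p)%nat -> Rabs (x i) <= vnorm p x.
Proof. intros Hi. unfold vnorm. rewrite <- sqrt_Rsqr_abs. apply sqrt_le_1_alt. unfold Rsqr.
 apply (sf_term p (fun i => x i * x i)); auto. intros; nra. Qed.

Lemma vnorm_small p x eta : 0 <= eta -> (forall i, (i < p)%nat -> Rabs (x i) <= eta) -> vnorm p x <= INR p * eta.
Proof.
  intros He H. unfold vnorm. apply sqrt_le_sq. apply Rmult_le_pos; [apply pos_INR|auto].
  eapply Rle_trans. apply (sf_const p _ (eta * eta)). intros i Hi. specialize (H i Hi).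
  replace (x i * x i) with (Rabs (x i) * Rabs (x i)) by (rewrite <- Rabs_mult; apply Rabs_pos_eq; nra). pose proof (Rabs_pos (x i)). nra.
  assert (INR p <= INR p * INR p). { destruct p. simpl; lra. rewrite S_INR. pose proof (pos_INR p). nra. }
  assert (0 <= eta * eta) by nra. nra.
Qed.

Lemma vnorm_zero p x : in_Rp p x -> vnorm p x = 0 -> x = vzero.
Proof.
  intros Hx H. apply functional_extensionality; intro i. unfold vzero.
  destruct (Compare_dec.le_lt_dec p i). apply Hx; auto.
  pose proof (coord_le p x i l). rewrite H in H0. pose proof (Rabs_pos (x i)).
  destruct (Req_dec (x i) 0) as [E|E]; auto. exfalso. apply (Rabs_no_R0 _ E). lra.
Qed.

Lemma vnorm_pos p x : in_Rp p x -> x <> vzero -> 0 < vnorm p x.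
Proof. intros Hx Hn. destruct (vnorm_nonneg p x) as [H|H]; auto. exfalso. apply Hn. apply (vnorm_zero p); auto. Qed.

Lemma vnorm_vzero p : vnorm p vzero = 0.
Proof. unfold vnorm, nsq, vzero. replace (sum_first p (fun _ => 0 * 0)) with 0. apply sqrt_0.
 induction p; simpl; auto; rewrite <- IHp; ring. Qed.

Lemma ip_lin p m x y : ip p m x - ip p m y = ip p m (vsub x y).
Proof. unfold ip, vsub. induction p; simpl; [ring|]. rewrite <- IHp. ring. Qed.

Lemma ip_add p m x y : ip p m (vadd x y) = ip p m x + ip p m y.
Proof. unfold ip, vadd. rewrite <- sf_plus. apply sf_ext; intros; ring. Qed.

Lemma choice_nat {A : Type} (Q : nat -> A -> Prop) : (forall n, exists x, Q n x) -> exists f, forall n, Q n (f n).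
Proof. intros H. exists (fun n => proj1_sig (constructive_indefinite_description _ (H n))). intros n. apply (proj2_sig (constructive_indefinite_description _ (H n))). Qed.

Definition incr (phi : nat -> nat) := forall n, (phi n < phi (S n))%nat.

Lemma incr_ge phi : incr phi -> forall n, (n <= phi n)%nat.
Proof. intros H n; induction n; [lia|]. specialize (H n). lia. Qed.

Lemma incr_mono phi : incr phi -> forall m n, (m <= n)%nat -> (phi m <= phi n)%nat.
Proof. intros H m n Hmn; induction Hmn; [lia|]. specialize (H m0). lia. Qed.

Lemma incr_comp f g : incr f -> incr g -> incr (fun n => f (g n)).
Proof. intros Hf Hg n. unfold incr in *. specialize (Hg n).
 assert (f (S (g n)) <= f (g (S n)))%nat by (apply incr_mono; auto). specialize (Hf (g n)). lia. Qed.

Lemma inv_Sn_pos n : 0 < / INR (S n).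
Proof. apply Rinv_0_lt_compat, lt_0_INR; lia. Qed.

Lemma inv_Sn_le m n : (m <= n)%nat -> / INR (S n) <= / INR (S m).
Proof. intros H. apply Rinv_le_contravar. apply lt_0_INR; lia. apply le_INR; lia. Qed.

Lemma arch_inv eps : 0 < eps -> exists N, / INR (S N) < eps.
Proof. intros He. destruct (archimed (/ eps)) as [H1 _].
 assert (0 < IZR (up (/ eps))) by (pose proof (Rinv_0_lt_compat _ He); lra).
 exists (Z.to_nat (up (/ eps))). rewrite S_INR, INR_IZR_INZ, Z2Nat.id by (apply le_IZR; lra).
 set (X := IZR (up (/ eps)) + 1). assert (0 < X) by (unfold X; lra).
 apply Rmult_lt_reg_l with X; auto. rewrite Rinv_r by lra.
 assert (eps * / eps = 1) by (field; lra). unfold X in *. nra. Qed.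

Lemma arch_nat x : exists N, x < INR N.
Proof. destruct (archimed x) as [H1 _]. destruct (Rle_lt_dec (IZR (up x)) 0).
 exists 0%nat. simpl. lra.
 exists (Z.to_nat (up x)). rewrite INR_IZR_INZ, Z2Nat.id by (apply le_IZR; lra). lra. Qed.

Lemma bw1 (v : nat -> R) B : (forall n, Rabs (v n) <= B) ->
  exists phi l, incr phi /\ forall n, Rabs (v (phi n) - l) < / INR (S n).
Proof.
  intros HB.
  destruct (Bolzano_Weierstrass v (fun c => -B <= c <= B) (compact_P3 (-B) B)) as [l Hl].
  { intros n. specialize (HB n). pose proof (Rle_abs (v n)). pose proof (Rle_abs (- v n)). rewrite Rabs_Ropp in *. lra. }
  assert (H : forall N k, exists q, (N <= q)%nat /\ Rabs (v q - l) < / INR (S k)).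
  { intros N k. set (d := mkposreal _ (inv_Sn_pos k)).
    destruct (Hl (disc l d) N) as [q [Hq1 Hq2]]. exists d. intros y Hy; exact Hy.
    exists q. split; auto. }
  assert (H2 : forall N, exists g : nat -> nat, forall k, (N <= g k)%nat /\ Rabs (v (g k) - l) < / INR (S k)).
  { intros N. apply (choice_nat (fun k q => (N <= q)%nat /\ Rabs (v q - l) < / INR (S k))). apply H. }
  destruct (choice_nat _ H2) as [g Hg].
  pose (phi := fix f n := match n with 0%nat => g 0%nat 0%nat | S n => g (S (f n)) (S n) end).
  exists phi, l. split.
  - intros n. simpl. destruct (Hg (S (phi n)) (S n)). lia.
  - intros [|n]; simpl. apply (Hg 0%nat 0%nat). apply (Hg _ (S n)).
Qed.

Lemma bwc p : forall (u : nat -> vec) B, (forall n i, (i < p)%nat -> Rabs (u n i) <= B) ->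
  exists phi l, incr phi /\ forall eps, 0 < eps -> exists N, forall n, (N <= n)%nat ->
    forall i, (i < p)%nat -> Rabs (u (phi n) i - l i) < eps.
Proof.
  induction p; intros u B HB.
  - exists (fun n => n), vzero. split. intros n; lia. intros eps He; exists 0%nat; intros; lia.
  - destruct (IHp u B) as [phi1 [l1 [Hi1 Hc1]]]. { intros; apply HB; lia. }
    destruct (bw1 (fun n => u (phi1 n) p) B) as [phi2 [l0 [Hi2 Hc2]]]. { intros; apply HB; lia. }
    exists (fun n => phi1 (phi2 n)), (fun i => if Nat.eqb i p then l0 else l1 i). split.
    apply incr_comp; auto.
    intros eps He. destruct (Hc1 eps He) as [N1 HN1]. destruct (arch_inv eps He) as [N2 HN2].
    exists (Nat.max N1 N2). intros n Hn i Hi.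
    destruct (Nat.eqb_spec i p) as [->|Hne].
    + eapply Rlt_le_trans. apply Hc2. assert (/ INR (S n) <= / INR (S N2)) by (apply inv_Sn_le; lia). lra.
    + apply HN1; [| lia]. pose proof (incr_ge _ Hi2 n). lia.
Qed.

Definition cvg p (u : nat -> vec) l := forall eps, 0 < eps -> exists N, forall n, (N <= n)%nat -> vnorm p (vsub (u n) l) < eps.

Lemma bwv p (u : nat -> vec) B : (forall n, in_Rp p (u n)) -> (forall n, vnorm p (u n) <= B) ->
  exists phi l, incr phi /\ in_Rp p l /\ cvg p (fun n => u (phi n)) l.
Proof.
  intros Hin HB. destruct (bwc p u B) as [phi [l [Hi Hc]]].
  { intros n i Hi. apply Rle_trans with (vnorm p (u n)); [apply coord_le; auto| auto]. }
  exists phi, (fun i => if Nat.ltb i p then l i else 0). split; auto. split.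
  { intros i Hip. destruct (Nat.ltb_spec i p); auto; lia. }
  intros eps He. assert (Hp : 0 < INR p + 1) by (pose proof (pos_INR p); lra).
  destruct (Hc (eps / (INR p + 1))) as [N HN]. apply Rdiv_lt_0_compat; auto.
  exists N. intros n Hn. eapply Rle_lt_trans. apply (vnorm_small p _ (eps / (INR p + 1))).
  apply Rlt_le, Rdiv_lt_0_compat; auto.
  intros i Hi'. unfold vsub. destruct (Nat.ltb_spec i p); [|lia]. apply Rlt_le, HN; auto.
  assert (INR p * (eps / (INR p + 1)) = eps - eps/(INR p+1)) by (field; lra).
  assert (0 < eps / (INR p + 1)) by (apply Rdiv_lt_0_compat; auto). lra.
Qed.

Lemma cvg_sub p u l phi : incr phi -> cvg p u l -> cvg p (fun n => u (phi n)) l.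
Proof. intros Hi H eps He. destruct (H eps He) as [N HN]. exists N. intros n Hn. apply HN. pose proof (incr_ge _ Hi n). lia. Qed.

Lemma vsub_in p x y : in_Rp p x -> in_Rp p y -> in_Rp p (vsub x y).
Proof. intros Hx Hy i Hi. unfold vsub. rewrite Hx, Hy by auto. ring. Qed.
Lemma vadd_in p x y : in_Rp p x -> in_Rp p y -> in_Rp p (vadd x y).
Proof. intros Hx Hy i Hi. unfold vadd. rewrite Hx, Hy by auto. ring. Qed.
Lemma vopp_in p x : in_Rp p x -> in_Rp p (vopp x).
Proof. intros Hx i Hi. unfold vopp. rewrite Hx by auto. ring. Qed.
Lemma vscal_in p t x : in_Rp p x -> in_Rp p (vscal t x).
Proof. intros Hx i Hi. unfold vscal. rewrite Hx by auto. ring. Qed.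

Definition vbounded p (S : vec -> Prop) := exists R, forall x, S x -> vnorm p x <= R.

Lemma cb_compact p S : subset_Rp p S -> closed_Rp p S -> vbounded p S -> compact_Rp p S.
Proof.
  intros Hs Hc [R HR] u Hu. destruct (bwv p u R) as [phi [l [Hi [Hl Hcv]]]]; auto.
  exists phi, l. split; auto. split; auto. apply Hc; auto.
  intros eps He. destruct (Hcv eps He) as [N HN]. exists (u (phi N)). split; auto. rewrite vsub_sym. apply HN; lia.
Qed.

Lemma compact_bounded p K : compact_Rp p K -> vbounded p K.
Proof.
  intros Hc. apply NNPP. intros Hn.
  assert (H : forall n, exists x, K x /\ INR n < vnorm p x).
  { intros n. apply NNPP. intros H. apply Hn. exists (INR n). intros x Hx. apply Rnot_lt_le. intros H'. apply H. eauto. }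
  destruct (choice_nat _ H) as [u Hu].
  destruct (Hc u (fun n => proj1 (Hu n))) as [phi [l [Hi [Hl Hcv]]]].
  destruct (Hcv 1 ltac:(lra)) as [N HN].
  destruct (arch_nat (vnorm p l + 1)) as [n0 Hn0].
  set (n := Nat.max N n0).
  assert (A1 := HN n ltac:(lia)). assert (A2 := proj2 (Hu (phi n))).
  assert (A3 := le_INR _ _ (incr_ge _ Hi n)). assert (A4 := le_INR n0 n ltac:(lia)).
  pose proof (vnorm_le_sub p (u (phi n)) l). lra.
Qed.

Lemma minlem p SS (f : vec -> R) L : compact_Rp p SS -> (exists x, SS x) -> 0 <= L ->
  (forall x y, SS x -> SS y -> Rabs (f x - f y) <= L * vnorm p (vsub x y)) ->
  exists x, SS x /\ forall y, SS y -> f x <= f y.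
Proof.
  intros Hc [x0 Hx0] HL Hf.
  assert (Hlb : exists b, forall y, SS y -> b <= f y).
  { apply NNPP. intros Hn.
    assert (H : forall n, exists y, SS y /\ f y < - INR n).
    { intros n. apply NNPP. intros H. apply Hn. exists (- INR n). intros y Hy. apply Rnot_lt_le. intros H'. apply H. eauto. }
    destruct (choice_nat _ H) as [u Hu].
    destruct (Hc u (fun n => proj1 (Hu n))) as [phi [l [Hi [Hl Hcv]]]].
    destruct (Hcv 1 ltac:(lra)) as [N HN].
    destruct (arch_nat (L - f l)) as [n0 Hn0].
    set (n := Nat.max N n0).
    assert (A1 := HN n ltac:(lia)). assert (A2 := proj2 (Hu (phi n))).
    assert (A3 := le_INR _ _ (incr_ge _ Hi n)). assert (A4 := le_INR n0 n ltac:(lia)).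
    assert (A5 := Hf _ _ (proj1 (Hu (phi n))) Hl).
    pose proof (Rle_abs (- (f (u (phi n)) - f l))). rewrite Rabs_Ropp in H0.
    assert (L * vnorm p (vsub (u (phi n)) l) <= L * 1) by (apply Rmult_le_compat_l; lra). lra. }
  destruct Hlb as [b Hb].
  destruct (completeness (fun r => exists y, SS y /\ r = - f y)) as [s [Hs1 Hs2]].
  { exists (- b). intros r [y [Hy ->]]. specialize (Hb y Hy). lra. }
  { exists (- f x0). eauto. }
  assert (Hge : forall y, SS y -> - s <= f y). { intros y Hy. assert (- f y <= s) by (apply Hs1; eauto). lra. }
  assert (H : forall n, exists y, SS y /\ f y < - s + / INR (S n)).
  { intros n. apply NNPP. intros H. assert (s <= s - / INR (S n)).
    { apply Hs2. intros r [y [Hy ->]]. apply Rnot_lt_le. intros H'. apply H. exists y. split; auto. lra. }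
    pose proof (inv_Sn_pos n). lra. }
  destruct (choice_nat _ H) as [u Hu].
  destruct (Hc u (fun n => proj1 (Hu n))) as [phi [l [Hi [Hl Hcv]]]].
  exists l. split; auto. intros y Hy. apply Rle_trans with (- s); [|apply Hge; auto].
  apply Rnot_lt_le. intros Hlt.
  set (d := f l - - s). assert (Hd : 0 < d) by (unfold d; lra).
  destruct (Hcv (d / (2 * (L + 1)))) as [N HN]. apply Rdiv_lt_0_compat; lra.
  destruct (arch_inv (d / 2)) as [N2 HN2]. lra.
  set (n := Nat.max N N2).
  assert (A1 := HN n ltac:(lia)). assert (A2 := proj2 (Hu (phi n))).
  assert (A3 : / INR (S (phi n)) <= / INR (S N2)). { apply inv_Sn_le. pose proof (incr_ge _ Hi n). lia. }
  assert (A5 := Hf _ _ (proj1 (Hu (phi n))) Hl).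
  pose proof (Rle_abs (- (f (u (phi n)) - f l))). rewrite Rabs_Ropp in H0.
  assert (L * vnorm p (vsub (u (phi n)) l) <= L * (d / (2 * (L + 1)))) by (apply Rmult_le_compat_l; lra).
  assert (L * (d / (2 * (L + 1))) <= d / 2).
  { unfold Rdiv. rewrite Rinv_mult. assert (0 < / (L+1)) by (apply Rinv_0_lt_compat; lra).
    assert (L * / (L+1) <= 1). { apply Rmult_le_reg_r with (L+1). lra. rewrite Rmult_assoc, Rinv_l by lra. lra. }
    assert (0 <= d * / 2) by lra. 
    replace (L * (d * (/ 2 * / (L + 1)))) with ((L * / (L+1)) * (d * / 2)) by ring. nra. }
  unfold d in *. lra.
Qed.

Ltac vext := apply functional_extensionality; intro; unfold vsub, vadd, vopp, vscal, vzero; try ring.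

Lemma vsub_self x : vsub x x = vzero.
Proof. vext. Qed.
Lemma vsub_zero x : vsub x vzero = x.
Proof. vext. Qed.

Lemma vnorm_lip p x y : Rabs (vnorm p x - vnorm p y) <= 1 * vnorm p (vsub x y).
Proof. rewrite Rmult_1_l. pose proof (vnorm_le_sub p x y). pose proof (vnorm_le_sub p y x).
 rewrite (vsub_sym p y x) in H0. apply Rabs_le. lra. Qed.

Lemma pos_functional p P C : good_cone p P -> good_cone p C ->
  (forall x, P x -> interior_pt p C x \/ x = vzero) ->
  exists m, forall q, P q -> q <> vzero -> 0 < ip p m q.
Proof.
  intros [HsP _] [HsC [HclC [H0C [HaddC [HscC [HptC [c0 [Hc0in [r0 [Hr0 Hball]]]]]]]]]] Hint.
  assert (Hc0 : C c0). { apply Hball; auto. rewrite vsub_self, vnorm_vzero. auto. }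
  set (D := fun x => in_Rp p x /\ C (vsub x c0) /\ vnorm p x <= vnorm p c0).
  assert (HD : compact_Rp p D).
  { apply cb_compact.
    - intros x [Hx _]; auto.
    - intros x Hx Happ. split; auto. split.
      + apply HclC. apply vsub_in; auto. intros eps He. destruct (Happ eps He) as [y [[Hy1 [Hy2 Hy3]] Hy4]].
        exists (vsub y c0). split; auto. replace (vsub (vsub x c0) (vsub y c0)) with (vsub x y) by vext. auto.
      + apply Rnot_lt_le. intros Hlt. destruct (Happ (vnorm p x - vnorm p c0)) as [y [[Hy1 [Hy2 Hy3]] Hy4]]. lra.
        pose proof (vnorm_le_sub p x y). lra.
    - exists (vnorm p c0). intros x [_ [_ H]]; auto. }
  destruct (minlem p D (vnorm p) 1 HD) as [m [[Hm1 [Hm2 Hm3]] Hmin]].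
  { exists c0. split; auto. split; [rewrite vsub_self; auto| lra]. }
  lra. { intros; apply vnorm_lip. }
  assert (Claim1 : forall k, C k -> 0 <= ip p m k).
  { intros k Hk.
    assert (Ht : forall t, 0 < t -> 0 <= 2 * ip p m k + t * nsq p k).
    { intros t Ht.
      set (x := fun i => m i + t * k i).
      assert (vnorm p m <= vnorm p x).
      { destruct (Rle_lt_dec (vnorm p x) (vnorm p c0)).
        - apply Hmin. split. intros i Hi. unfold x. rewrite Hm1, (HsC k Hk) by auto. ring.
          split; auto. replace (vsub x c0) with (vadd (vsub m c0) (vscal t k)) by (unfold x; vext).
          apply HaddC; auto. apply HscC; auto; lra.
        - lra. }
      assert (nsq p m <= nsq p x).
      { rewrite <- !vnorm_sq. pose proof (vnorm_nonneg p m). nra. }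
      unfold x in H0. rewrite nsq_lin in H0. pose proof (nsq_nonneg p k).
      assert (0 <= t * (2 * ip p m k + t * nsq p k)) by nra.
      apply Rmult_le_reg_l with t; auto. lra. }
    apply Rnot_lt_le. intros Hlt. pose proof (nsq_nonneg p k).
    specialize (Ht (- ip p m k / (nsq p k + 1))).
    assert (0 < - ip p m k / (nsq p k + 1)) by (apply Rdiv_lt_0_compat; lra).
    assert (- ip p m k / (nsq p k + 1) * nsq p k < - ip p m k).
    { assert (- ip p m k / (nsq p k + 1) * nsq p k = - ip p m k - (- ip p m k / (nsq p k + 1))) by (field; lra). lra. }
    specialize (Ht H0). lra. }
  exists m. intros q Hq Hqn.
  assert (Hqin := HsP q Hq).
  destruct (Hint q Hq) as [[_ [r [Hr Hrb]]]|E]; [|contradiction].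
  destruct (classic (m = vzero)) as [Em|Em].
  - exfalso. subst m. replace (vsub vzero c0) with (vopp c0) in Hm2 by vext.
    assert (c0 = vzero) by (apply HptC; auto). subst c0.
    pose proof (vnorm_pos p q Hqin Hqn).
    set (t := r0 / (2 * vnorm p q)).
    assert (Hnt : vnorm p (vscal t q) = r0 / 2).
    { rewrite vnorm_scal, Rabs_pos_eq. unfold t. field. lra. unfold t. apply Rlt_le, Rdiv_lt_0_compat; lra. }
    assert (C (vscal t q)). { apply Hball. apply vscal_in; auto. rewrite vsub_zero, Hnt. lra. }
    assert (C (vopp (vscal t q))). { apply Hball. apply vopp_in, vscal_in; auto. rewrite vsub_zero, vnorm_opp, Hnt. lra. }
    assert (Hz : vscal t q = vzero) by (apply HptC; auto). rewrite Hz, vnorm_vzero in Hnt. lra.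
  - pose proof (vnorm_pos p m Hm1 Em).
    set (t := r / (2 * vnorm p m)).
    assert (Htp : 0 < t) by (unfold t; apply Rdiv_lt_0_compat; lra).
    assert (C (vsub q (vscal t m))).
    { apply Hrb. apply vsub_in; auto. apply vscal_in; auto.
      replace (vsub (vsub q (vscal t m)) q) with (vopp (vscal t m)) by vext.
      rewrite vnorm_opp, vnorm_scal, Rabs_pos_eq by lra. unfold t. replace (r / (2 * vnorm p m) * vnorm p m) with (r/2) by (field; lra). lra. }
    specialize (Claim1 _ H0). rewrite <- ip_lin in Claim1.
    assert (ip p m (vscal t m) = t * nsq p m). { unfold ip, nsq, vscal. rewrite <- sf_scal. apply sf_ext. intros; ring. }
    rewrite H1 in Claim1. rewrite <- vnorm_sq in Claim1. assert (0 < t * (vnorm p m * vnorm p m)) by (apply Rmult_lt_0_compat; nra). lra.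
Qed.


Lemma unif_delta p P C : good_cone p P -> good_cone p C ->
  (forall x, P x -> interior_pt p C x \/ x = vzero) ->
  exists d, 0 < d <= 1 /\ forall q e, P q -> in_Rp p e -> vnorm p e < d * vnorm p q -> C (vsub q e).
Proof.
  intros [HsP [HclP [H0P [HaddP [HscP _]]]]] [HsC [HclC [H0C [HaddC [HscC _]]]]] Hint.
  apply NNPP. intros Hn.
  assert (H : forall n, exists qe : vec * vec, P (fst qe) /\ in_Rp p (snd qe) /\
     vnorm p (snd qe) < / INR (S n) * vnorm p (fst qe) /\ ~ C (vsub (fst qe) (snd qe))).
  { intros n. apply NNPP. intros H. apply Hn. exists (/ INR (S n)). split.
    split. apply inv_Sn_pos. replace 1 with (/ INR (S 0)) by (simpl; lra). apply inv_Sn_le; lia.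
    intros q e Hq He Hlt. apply NNPP. intros HC. apply H. exists (q, e). simpl. auto. }
  destruct (choice_nat _ H) as [qe Hqe].
  set (q := fun n => fst (qe n)). set (e := fun n => snd (qe n)).
  assert (HN : forall n, 0 < vnorm p (q n)).
  { intros n. destruct (Hqe n) as [_ [_ [H1 _]]]. pose proof (vnorm_nonneg p (snd (qe n))).
    pose proof (inv_Sn_pos n). unfold q. destruct (vnorm_nonneg p (fst (qe n))) as [|E]; auto. rewrite <- E in H1. lra. }
  set (u := fun n => vscal (/ vnorm p (q n)) (q n)).
  assert (Hu1 : forall n, vnorm p (u n) = 1).
  { intros n. unfold u. rewrite vnorm_scal, Rabs_pos_eq. field. specialize (HN n); lra.
    apply Rlt_le, Rinv_0_lt_compat; auto. }
  assert (HuP : forall n, P (u n)).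
  { intros n. apply HscP. apply Rlt_le, Rinv_0_lt_compat; auto. apply (Hqe n). }
  destruct (bwv p u 1) as [phi [l [Hi [Hl Hcv]]]].
  { intros n; apply HsP; auto. } { intros n; rewrite Hu1; lra. }
  assert (HlP : P l).
  { apply HclP; auto. intros eps He. destruct (Hcv eps He) as [N HN']. exists (u (phi N)). split; auto.
    rewrite vsub_sym. apply HN'; lia. }
  assert (Hlnz : l <> vzero).
  { intros El. destruct (Hcv (1/2) ltac:(lra)) as [N HN']. specialize (HN' N (le_n N)).
    rewrite El, vsub_zero, Hu1 in HN'. lra. }
  destruct (Hint l HlP) as [[_ [r [Hr Hrb]]]|E]; [|contradiction].
  destruct (Hcv (r/2) ltac:(lra)) as [N1 HN1]. destruct (arch_inv (r/2) ltac:(lra)) as [N2 HN2].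
  set (n := Nat.max N1 N2). set (k := phi n).
  destruct (Hqe k) as [Hqk [Hek [Hlt HnC]]]. fold (q k) (e k) in Hqk, Hek, Hlt, HnC.
  set (f := vscal (/ vnorm p (q k)) (e k)).
  assert (Hf : vnorm p f < / INR (S k)).
  { unfold f. rewrite vnorm_scal, Rabs_pos_eq. 2: apply Rlt_le, Rinv_0_lt_compat; auto.
    apply Rmult_lt_reg_l with (vnorm p (q k)); auto. rewrite <- Rmult_assoc, Rinv_r by (specialize (HN k); lra). lra. }
  assert (Hk : / INR (S k) <= / INR (S N2)). { apply inv_Sn_le. pose proof (incr_ge _ Hi n). unfold k. lia. }
  assert (Hy : C (vsub (u k) f)).
  { apply Hrb. apply vsub_in. apply HsP; auto. apply vscal_in; auto.
    replace (vsub (vsub (u k) f) l) with (vsub (vsub (u k) l) f) by vext.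
    eapply Rle_lt_trans. apply vnorm_sub_le. assert (A1 := HN1 n ltac:(lia)). fold k in A1. lra. }
  apply HnC. replace (vsub (q k) (e k)) with (vscal (vnorm p (q k)) (vsub (u k) f)).
  apply HscC; auto. apply vnorm_nonneg.
  unfold u, f. apply functional_extensionality; intro i. unfold vsub, vscal. field. specialize (HN k); lra.
Qed.

Lemma dominate p P m K : good_cone p P -> (forall q, P q -> q <> vzero -> 0 < ip p m q) ->
  subset_Rp p K -> compact_Rp p K -> forall z, K z -> exists y, eff K P y /\ P (vsub z y).
Proof.
  intros [HsP [HclP [H0P [HaddP [HscP _]]]]] Hm HsK HcK z Hz.
  set (S0 := fun y => K y /\ P (vsub z y)).
  assert (Hc : compact_Rp p S0).
  { intros u Hu. destruct (HcK u (fun n => proj1 (Hu n))) as [phi [l [Hi [Hl Hcv]]]].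
    exists phi, l. split; auto. split; auto. split; auto.
    apply HclP. apply vsub_in; auto. intros eps He. destruct (Hcv eps He) as [N HN].
    exists (vsub z (u (phi N))). split. apply (Hu (phi N)).
    replace (vsub (vsub z l) (vsub z (u (phi N)))) with (vsub (u (phi N)) l) by vext. apply HN; lia. }
  destruct (minlem p S0 (ip p m) (vnorm p m) Hc) as [y [[Hy1 Hy2] Hmin]].
  { exists z. split; auto. rewrite vsub_self; auto. }
  apply vnorm_nonneg.
  { intros x y _ _. rewrite ip_lin. apply CS_abs. }
  exists y. split; auto. split; auto.
  intros w Hw [q [Hq ->]].
  assert (S0 (vsub y q)). { split; auto. replace (vsub z (vsub y q)) with (vadd (vsub z y) q) by vext. auto. }
  specialize (Hmin _ H). 
  assert (ip p m y - ip p m (vsub y q) = ip p m q). { rewrite ip_lin. f_equal. vext. }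
  destruct (classic (q = vzero)) as [->|Hqn]. apply vsub_zero.
  specialize (Hm q Hq Hqn). lra.
Qed.


Lemma dist_ex p y S : (exists m, S m) -> exists r, is_dist p y S r.
Proof.
  intros [m0 Hm0].
  destruct (completeness (fun r => exists m, S m /\ - r = vnorm p (vsub y m))) as [s [Hs1 Hs2]].
  { exists 0. intros r [m [_ Hr]]. pose proof (vnorm_nonneg p (vsub y m)). lra. }
  { exists (- vnorm p (vsub y m0)). exists m0. split; auto. ring. }
  exists (- s). split.
  - intros x [m [Hm ->]]. assert (- vnorm p (vsub y m) <= s). { apply Hs1. exists m. split; auto. ring. } lra.
  - intros b Hb. assert (s <= - b). { apply Hs2. intros r [m [Hm Hr]]. assert (b <= - r). { apply Hb. eauto. } lra. } lra.
Qed.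

Lemma dist_le p y S r m : is_dist p y S r -> S m -> r <= vnorm p (vsub y m).
Proof. intros [H _] Hm. apply H. eauto. Qed.

Lemma dist_near p y S r eps : is_dist p y S r -> 0 < eps -> exists m, S m /\ vnorm p (vsub y m) < r + eps.
Proof. intros [_ H] He. apply NNPP. intros Hn. assert (r + eps <= r). { apply H. intros x [m [Hm ->]]. apply Rnot_lt_le. intros Hl. apply Hn. eauto. } lra. Qed.

Lemma lub_ex p A B : (exists a, A a) -> (exists b, B b) -> vbounded p A -> vbounded p B ->
  exists s, is_lub (fun r => exists a, A a /\ is_dist p a B r) s.
Proof.
  intros [a0 Ha0] [b0 Hb0] [RA HRA] [RB HRB].
  destruct (completeness (fun r => exists a, A a /\ is_dist p a B r)) as [s Hs].
  { exists (RA + RB). intros r [a [Ha Hr]]. eapply Rle_trans. apply (dist_le _ _ _ _ _ Hr Hb0).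
    eapply Rle_trans. apply vnorm_sub_le. specialize (HRA a Ha). specialize (HRB b0 Hb0). lra. }
  { destruct (dist_ex p a0 B) as [r Hr]; eauto. }
  eauto.
Qed.

Lemma haus_ex p A B : (exists a, A a) -> (exists b, B b) -> vbounded p A -> vbounded p B ->
  exists h, is_hausdorff p A B h.
Proof.
  intros HA HB HbA HbB. destruct (lub_ex p A B) as [s1 H1]; auto. destruct (lub_ex p B A) as [s2 H2]; auto.
  exists (Rmax s1 s2), s1, s2. auto.
Qed.

Lemma hd1 p A B h : is_hausdorff p A B h -> (exists b, B b) -> forall a, A a -> forall eps, 0 < eps ->
  exists b, B b /\ vnorm p (vsub a b) < h + eps.
Proof.
  intros [s1 [s2 [[Hs1 _] [_ ->]]]] HB a Ha eps He. destruct (dist_ex p a B HB) as [r Hr].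
  assert (r <= s1) by (apply Hs1; eauto). pose proof (Rmax_l s1 s2).
  destruct (dist_near _ _ _ _ _ Hr He) as [b [Hb Hbl]]. exists b. split; auto. lra.
Qed.

Lemma hd2 p A B h : is_hausdorff p A B h -> (exists a, A a) -> forall b, B b -> forall eps, 0 < eps ->
  exists a, A a /\ vnorm p (vsub b a) < h + eps.
Proof.
  intros [s1 [s2 [_ [[Hs2 _] ->]]]] HA b Hb eps He. destruct (dist_ex p b A HA) as [r Hr].
  assert (r <= s2) by (apply Hs2; eauto). pose proof (Rmax_r s1 s2).
  destruct (dist_near _ _ _ _ _ Hr He) as [a [Ha Hal]]. exists a. split; auto. lra.
Qed.

Lemma one_side p C P m d K1 K2 h : good_cone p P ->
  (forall q, P q -> q <> vzero -> 0 < ip p m q) -> 0 < d <= 1 ->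
  (forall q e, P q -> in_Rp p e -> vnorm p e < d * vnorm p q -> C (vsub q e)) ->
  KCP p C P K1 -> KCP p C P K2 ->
  (forall x, K1 x -> forall eps, 0 < eps -> exists z, K2 z /\ vnorm p (vsub x z) < h + eps) ->
  (forall x, K2 x -> forall eps, 0 < eps -> exists z, K1 z /\ vnorm p (vsub x z) < h + eps) ->
  forall a, eff K1 P a -> forall r, is_dist p a (eff K2 P) r -> r <= (1 + 2 / d) * h.
Proof.
  intros HP Hm Hd Hdel [HsK1 [_ [HcK1 Hiff1]]] [HsK2 [_ [HcK2 Hiff2]]] H12 H21 a Ha r Hr.
  set (M := 1 + 2 / d). assert (HM : 1 <= M) by (unfold M; assert (0 < 2/d) by (apply Rdiv_lt_0_compat; lra); lra).
  assert (Key : forall eps, 0 < eps -> r <= M * (h + eps)).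
  { intros eps He.
    destruct (H12 a (proj1 Ha) eps He) as [z [Hz Haz]].
    destruct (dominate p P m K2 HP Hm HsK2 HcK2 z Hz) as [y2 [Hy2 Hzy]].
    destruct (H21 y2 (proj1 Hy2) eps He) as [w [Hw Hyw]].
    set (q := vsub z y2). set (e := vadd (vsub a z) (vsub y2 w)).
    assert (Hain := HsK1 a (proj1 Ha)). assert (Hzin := HsK2 z Hz). assert (Hy2in := HsK2 y2 (proj1 Hy2)). assert (Hwin := HsK1 w Hw).
    assert (He2 : vnorm p e < 2 * (h + eps)). { eapply Rle_lt_trans. apply vnorm_add. lra. }
    assert (Hq : vnorm p q <= vnorm p e / d).
    { apply Rnot_lt_le. intros Hlt.
      assert (Hlt' : vnorm p e < d * vnorm p q).
      { apply Rmult_lt_reg_r with (/ d). apply Rinv_0_lt_compat; lra.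
        replace (d * vnorm p q * / d) with (vnorm p q) by (field; lra). exact Hlt. }
      assert (HCq : C (vsub q (vopp e))).
      { apply Hdel. exact Hzy. apply vopp_in. unfold e. apply vadd_in; apply vsub_in; auto. rewrite vnorm_opp. auto. }
      assert (Ea : eff K1 C a) by (apply Hiff1; auto).
      assert (Ewa : w = a).
      { apply (proj2 Ea w Hw). exists (vsub q (vopp e)). split; auto. unfold q, e. vext. }
      assert (Eq : q = vopp e).
      { replace q with (vadd (vsub a w) (vopp e)) by (unfold q, e; vext). rewrite Ewa, vsub_self. vext. }
      rewrite Eq, vnorm_opp in Hlt'. pose proof (vnorm_nonneg p e). nra. }
    assert (Hay : vnorm p (vsub a y2) <= vnorm p (vsub a z) + vnorm p q) by apply vtri.
    assert (vnorm p e / d <= 2 * (h + eps) / d).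
    { apply Rmult_le_compat_r. apply Rlt_le, Rinv_0_lt_compat; lra. lra. }
    assert (M * (h + eps) = (h + eps) + 2 * (h + eps) / d) by (unfold M; field; lra).
    pose proof (dist_le _ _ _ _ _ Hr Hy2). lra. }
  apply Rnot_lt_le. intros Hlt.
  specialize (Key ((r - M * h) / (2 * M))). 
  assert (M * (h + (r - M * h) / (2 * M)) = M * h + (r - M * h) / 2) by (field; lra).
  assert (0 < (r - M * h) / (2 * M)) by (apply Rdiv_lt_0_compat; lra).
  specialize (Key H0). lra.
Qed.

Theorem proposition4p13 (p : nat) (C P : vec -> Prop) :
  good_cone p P ->
  good_cone p C ->
  (forall x, P x -> interior_pt p C x \/ x = vzero) ->
  exists M : R, 0 <= M /\
    forall K1 K2 : vec -> Prop, KCP p C P K1 -> KCP p C P K2 ->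
      (exists hE, is_hausdorff p (eff K1 P) (eff K2 P) hE) /\
      (exists hK, is_hausdorff p K1 K2 hK) /\
      (forall hE hK, is_hausdorff p (eff K1 P) (eff K2 P) hE ->
                     is_hausdorff p K1 K2 hK -> hE <= M * hK).
Proof.
  intros HP HC Hint.
  destruct (pos_functional p P C HP HC Hint) as [m Hm].
  destruct (unif_delta p P C HP HC Hint) as [d [Hd Hdel]].
  exists (1 + 2 / d). split. { assert (0 < 2/d) by (apply Rdiv_lt_0_compat; lra). lra. }
  intros K1 K2 HK1 HK2.
  assert (Facts : forall K, KCP p C P K -> (exists x, K x) /\ (exists x, eff K P x) /\ vbounded p K /\ vbounded p (eff K P)).
  { intros K [HsK [[x0 Hx0] [HcK _]]]. destruct (compact_bounded p K HcK) as [R HR].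
    split. eauto. split. destruct (dominate p P m K HP Hm HsK HcK x0 Hx0) as [y [Hy _]]. eauto.
    split; exists R; auto. intros x [Hx _]; auto. }
  destruct (Facts K1 HK1) as [HK1n [HE1n [HK1b HE1b]]].
  destruct (Facts K2 HK2) as [HK2n [HE2n [HK2b HE2b]]].
  split. apply haus_ex; auto. split. apply haus_ex; auto.
  intros hE hK [s1 [s2 [Hs1 [Hs2 ->]]]] HhK.
  apply Rmax_lub.
  - apply (proj2 Hs1). intros r [a [Ha Hr]].
    apply (one_side p C P m d K1 K2 hK HP Hm Hd Hdel HK1 HK2
      (fun x Hx eps He => hd1 p K1 K2 hK HhK HK2n x Hx eps He)
      (fun x Hx eps He => hd2 p K1 K2 hK HhK HK1n x Hx eps He) a Ha r Hr).
  - apply (proj2 Hs2). intros r [a [Ha Hr]].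
    apply (one_side p C P m d K2 K1 hK HP Hm Hd Hdel HK2 HK1
      (fun x Hx eps He => hd2 p K1 K2 hK HhK HK1n x Hx eps He)
      (fun x Hx eps He => hd1 p K1 K2 hK HhK HK2n x Hx eps He) a Ha r Hr).
Qed.
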